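(* Let $1<p<\infty$. For every $q\geq p$ we have $\ell_p\subset\ell_q$ (as sets of sequences), and every rectifiable curve in $\ell_p$ is also a rectifiable curve in $\ell_q$. Moreover, there exists a curve $\Gamma\subset\ell_p$ such that $\mathcal{H}^1_{\ell_q}(\Gamma)<\infty$ for every $q>p$, but $\mathcal{H}^1_{\ell_p}(\Gamma)=\infty$.
   Context: $\ell_r$ denotes the real Banach space of sequences $x=(x_1,x_2,\dots)$ with $|x|_r=(\sum_i|x_i|^r)^{1/r}<\infty$. A curve in a metric space is the image of a continuous map $[0,1]\to$ the space; it is rectifiable if its one-dimensional Hausdorff measure is finite. $\mathcal{H}^1_{\ell_r}$ denotes the one-dimensional Hausdorff measure computed with respect to the norm $|\cdot|_r$. *)

(* Defs.v *)
From Stdlib Require Import Reals Lra.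
Open Scope R_scope.

Definition rseq := nat -> R.

Definition seq_sub (x y : rseq) : rseq := fun k => x k - y k.

(* a^r for a >= 0, r > 0, with the convention 0^r = 0. *)
Definition rpow (a r : R) : R :=
  if Rlt_dec 0 a then Rpower a r else 0.

(* |x|_r <= d, i.e. sum_k |x_k|^r <= d^r (all partial sums bounded). *)
Definition lr_norm_le (r : R) (x : rseq) (d : R) : Prop :=
  0 <= d /\ forall N : nat, sum_f_R0 (fun k => rpow (Rabs (x k)) r) N <= rpow d r.

Definition in_lr (r : R) (x : rseq) : Prop := exists d : R, lr_norm_le r x d.

Definition rset := rseq -> Prop.

(* H^1_{l_r}(E) <= M: for every delta > 0 and eps > 0 there is a countable
   cover (C_i) of E by sets of |.|_r-diameter at most d_i <= delta with
   sum_i d_i <= M + eps.  (This unfolds H^1 = lim_{delta->0} H^1_delta,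
   H^1_delta(E) = inf { sum diam C_i : E subset U C_i, diam C_i <= delta }.) *)
Definition H1_le (r : R) (E : rset) (M : R) : Prop :=
  forall delta eps : R, 0 < delta -> 0 < eps ->
    exists (C : nat -> rset) (d : nat -> R),
      (forall x, E x -> exists i, C i x) /\
      (forall i, 0 <= d i <= delta) /\
      (forall i x y, C i x -> C i y -> lr_norm_le r (seq_sub x y) (d i)) /\
      (forall N, sum_f_R0 d N <= M + eps).

Definition H1_finite (r : R) (E : rset) : Prop := exists M : R, H1_le r E M.

Definition lr_continuous_on01 (r : R) (gamma : R -> rseq) : Prop :=
  (forall t, 0 <= t <= 1 -> in_lr r (gamma t)) /\
  (forall t, 0 <= t <= 1 -> forall eps, 0 < eps ->
     exists delta, 0 < delta /\
       forall s, 0 <= s <= 1 -> Rabs (s - t) < delta ->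
         lr_norm_le r (seq_sub (gamma s) (gamma t)) eps).

Definition is_curve (r : R) (G : rset) : Prop :=
  exists gamma : R -> rseq, lr_continuous_on01 r gamma /\
    forall x, G x <-> exists t, 0 <= t <= 1 /\ x = gamma t.

Definition rectifiable_curve (r : R) (G : rset) : Prop :=
  is_curve r G /\ H1_finite r G.

(* Main.v *)
Require Import Defs.
From Stdlib Require Import Reals Lra Lia Classical ClassicalEpsilon.
Open Scope R_scope.

Lemma Rpower_pos x y : 0 < Rpower x y.
Proof. unfold Rpower; apply exp_pos. Qed.

Lemma rpow_ge0 a r : 0 <= rpow a r.
Proof. unfold rpow; destruct (Rlt_dec 0 a); [left; apply Rpower_pos|lra]. Qed.

Lemma rpow_pos a r : 0 < a -> rpow a r = Rpower a r.
Proof. intro H; unfold rpow; destruct (Rlt_dec 0 a); [auto|lra]. Qed.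

Lemma rpow_0 r : rpow 0 r = 0.
Proof. unfold rpow; destruct (Rlt_dec 0 0); lra. Qed.

Lemma rpow_le r a b : 0 < r -> 0 <= a <= b -> rpow a r <= rpow b r.
Proof.
  intros Hr [Ha Hab]. destruct Ha as [Ha|Ha].
  - rewrite !rpow_pos by lra. apply Rle_Rpower_l; lra.
  - subst. rewrite rpow_0. apply rpow_ge0.
Qed.

Lemma rpow_lt r a b : 0 < r -> 0 <= a < b -> rpow a r < rpow b r.
Proof.
  intros Hr [Ha Hab]. rewrite (rpow_pos b) by lra. destruct Ha as [Ha|Ha].
  - rewrite !rpow_pos by lra. apply Rlt_Rpower_l; lra.
  - subst. rewrite rpow_0. apply Rpower_pos.
Qed.

Lemma rpow_le_inv r a b : 0 < r -> 0 <= a -> 0 <= b -> rpow a r <= rpow b r -> a <= b.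
Proof.
  intros Hr Ha Hb H. destruct (Rle_dec a b); auto.
  assert (rpow b r < rpow a r) by (apply rpow_lt; lra). lra.
Qed.

Lemma rpow_mult r a b : 0 <= a -> 0 <= b -> rpow (a*b) r = rpow a r * rpow b r.
Proof.
  intros Ha Hb. destruct Ha as [Ha|Ha]; [destruct Hb as [Hb|Hb]|].
  - rewrite !rpow_pos by (try apply Rmult_lt_0_compat; lra).
    symmetry; apply Rpower_mult_distr; lra.
  - subst. rewrite Rmult_0_r, rpow_0; ring.
  - subst. rewrite Rmult_0_l, rpow_0; ring.
Qed.

Lemma rpow_plus a r s : 0 <= a -> rpow a (r + s) = rpow a r * rpow a s.
Proof.
  intros [Ha|Ha].
  - rewrite !rpow_pos by lra. apply Rpower_plus.
  - subst. rewrite !rpow_0; ring.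
Qed.

Lemma Rpower_1_base x : Rpower 1 x = 1.
Proof. unfold Rpower. rewrite ln_1, Rmult_0_r. apply exp_0. Qed.

Lemma rpow_1 r : rpow 1 r = 1.
Proof. rewrite rpow_pos by lra. apply Rpower_1_base. Qed.

Lemma rpow_small a r : 0 <= a <= 1 -> 1 <= r -> rpow a r <= a.
Proof.
  intros [[Ha|Ha] Ha1] Hr.
  - replace r with (1 + (r - 1)) by ring. rewrite rpow_plus by lra.
    rewrite (rpow_pos a 1), Rpower_1 by lra.
    assert (rpow a (r-1) <= 1).
    { destruct (Req_dec r 1).
      - subst. replace (1-1) with 0 by ring. rewrite rpow_pos, Rpower_O by lra. lra.
      - rewrite <- (rpow_1 (r-1)) at 2. apply rpow_le; lra. }
    assert (0 <= rpow a (r-1)) by apply rpow_ge0. nra.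
  - subst. rewrite rpow_0. lra.
Qed.

Lemma Rpower2_ge q : 1 <= q -> 2 <= Rpower 2 q.
Proof. intro. rewrite <- (Rpower_1 2) at 1 by lra. apply Rle_Rpower; lra. Qed.

Lemma pow2_rpow (n : nat) r y : 0 < r -> 0 <= y ->
  2 ^ n * rpow y r = rpow (Rpower 2 (INR n / r) * y) r.
Proof.
  intros Hr [Hy|Hy].
  - rewrite !rpow_pos by (try apply Rmult_lt_0_compat; try apply Rpower_pos; lra).
    rewrite <- Rpower_mult_distr by (try apply Rpower_pos; lra).
    rewrite Rpower_mult. replace (INR n / r * r) with (INR n) by (field; lra).
    rewrite Rpower_pow by lra. reflexivity.
  - subst. rewrite Rmult_0_r, rpow_0. ring.
Qed.

Lemma sum_term_le (f : nat -> R) (k : nat) : (forall i, 0 <= f i) -> f k <= sum_f_R0 f k.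
Proof.
  intros H. destruct k; simpl; [lra|].
  assert (0 <= sum_f_R0 f k). { induction k; simpl; [apply H|]. specialize (H (S k)). lra. }
  lra.
Qed.

Lemma sum_nonneg (f : nat -> R) N : (forall i, 0 <= f i) -> 0 <= sum_f_R0 f N.
Proof. intros H; induction N; simpl; [apply H|]. specialize (H (S N)). lra. Qed.

Lemma coord_le r z d k : 0 < r -> lr_norm_le r z d -> Rabs (z k) <= d.
Proof.
  intros Hr [Hd H]. apply (rpow_le_inv r); auto using Rabs_pos.
  eapply Rle_trans; [|apply (H k)]. apply (sum_term_le (fun k => rpow (Rabs (z k)) r)). intro; apply rpow_ge0.
Qed.

Lemma sum_scal (f : nat -> R) c N : sum_f_R0 (fun i => f i * c) N = sum_f_R0 f N * c.
Proof. induction N; simpl; [ring|rewrite IHN; ring]. Qed.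

Lemma norm_mono p q x d : 0 < p -> p <= q -> lr_norm_le p x d -> lr_norm_le q x d.
Proof.
  intros Hp Hpq Hx. destruct (Req_dec p q) as [E|Hne]; [subst; auto|].
  assert (Hc : forall k, Rabs (x k) <= d) by (intro; eapply coord_le; eauto).
  destruct Hx as [Hd H]. split; auto. intro N.
  replace q with (p + (q - p)) by ring.
  rewrite rpow_plus by lra.
  eapply Rle_trans with (sum_f_R0 (fun k => rpow (Rabs (x k)) p * rpow d (q-p)) N).
  - apply sum_Rle. intros k _. rewrite rpow_plus by apply Rabs_pos.
    apply Rmult_le_compat_l; [apply rpow_ge0|]. apply rpow_le; [lra|]. split; [apply Rabs_pos|auto].
  - rewrite sum_scal. apply Rmult_le_compat_r; [apply rpow_ge0|auto].
Qed.

Lemma part1 p q : 0 < p -> p <= q ->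
  (forall x : rseq, in_lr p x -> in_lr q x) /\
  (forall G : rset, rectifiable_curve p G -> rectifiable_curve q G).
Proof.
  intros Hp Hpq. assert (Hin : forall x, in_lr p x -> in_lr q x).
  { intros x [d Hd]. exists d. apply (norm_mono p q); auto. }
  split; auto.
  intros G [[gam [[Hg1 Hg2] HG]] [M HM]]. split.
  - exists gam. split; auto. split.
    { intros t Ht. apply Hin. auto. }
    intros t Ht eps He. destruct (Hg2 t Ht eps He) as [de [Hde Hs]].
    exists de; split; auto. intros s Hs1 Hs2. apply (norm_mono p q); auto.
  - exists M. intros de eps Hde He. destruct (HM de eps Hde He) as [C [d [H1 [H2 [H3 H4]]]]].
    exists C, d. split; [auto|split; [auto|split; [|auto]]].
    intros j x y Hx Hy. apply (norm_mono p q); auto.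
Qed.

Definition cnt (a c K : nat) : nat := (Nat.min (S K) (a + c) - a)%nat.

Lemma sum_interval_le a c w (f : nat -> R) : 0 <= w ->
  (forall k, (a <= k < a + c)%nat -> f k <= w) ->
  (forall k, ~ (a <= k < a + c)%nat -> f k <= 0) ->
  forall K, sum_f_R0 f K <= INR (cnt a c K) * w.
Proof.
  intros Hw H1 H2 K. induction K; simpl.
  - destruct (Compare_dec.le_lt_dec (a + c) 0) as [Hl|Hl];
    [|destruct (Nat.eq_dec a 0)].
    + assert (cnt a c 0 = 0%nat) by (unfold cnt; lia). rewrite H, Rmult_0_l.
      apply H2; lia.
    + subst. assert (cnt 0 c 0 = 1%nat) by (unfold cnt; lia). rewrite H. simpl.
      rewrite Rmult_1_l. apply H1; lia.
    + assert (cnt a c 0 = 0%nat) by (unfold cnt; lia). rewrite H, Rmult_0_l.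
      apply H2; lia.
  - destruct (Compare_dec.le_lt_dec a (S K)) as [Ha|Ha];
    [destruct (Compare_dec.le_lt_dec (a+c) (S K)) as [Hb|Hb]|].
    + assert (cnt a c (S K) = cnt a c K) by (unfold cnt; lia). rewrite H.
      specialize (H2 (S K)). assert (f (S K) <= 0) by (apply H2; lia). lra.
    + assert (cnt a c (S K) = S (cnt a c K)) by (unfold cnt; lia). rewrite H, S_INR.
      specialize (H1 (S K)). assert (f (S K) <= w) by (apply H1; lia). lra.
    + assert (cnt a c (S K) = cnt a c K) by (unfold cnt; lia). rewrite H.
      specialize (H2 (S K)). assert (f (S K) <= 0) by (apply H2; lia). lra.
Qed.

Lemma sum_interval_le' a c w (f : nat -> R) : 0 <= w ->
  (forall k, (a <= k < a + c)%nat -> f k <= w) ->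
  (forall k, ~ (a <= k < a + c)%nat -> f k <= 0) ->
  forall K, sum_f_R0 f K <= INR c * w.
Proof.
  intros Hw H1 H2 K. eapply Rle_trans; [apply sum_interval_le; eauto|].
  apply Rmult_le_compat_r; auto. apply le_INR. unfold cnt; lia.
Qed.

Lemma sum_interval_ge a c w (f : nat -> R) : 0 <= w ->
  (forall k, (a <= k < a + c)%nat -> w <= f k) ->
  (forall k, 0 <= f k) ->
  forall K, INR (cnt a c K) * w <= sum_f_R0 f K.
Proof.
  intros Hw H1 H2 K. induction K; simpl.
  - destruct (Compare_dec.le_lt_dec (a + c) 0) as [Hl|Hl];
    [|destruct (Nat.eq_dec a 0)].
    + assert (cnt a c 0 = 0%nat) by (unfold cnt; lia). rewrite H, Rmult_0_l. auto.
    + subst. assert (cnt 0 c 0 = 1%nat) by (unfold cnt; lia). rewrite H. simpl.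
      rewrite Rmult_1_l. apply H1; lia.
    + assert (cnt a c 0 = 0%nat) by (unfold cnt; lia). rewrite H, Rmult_0_l. auto.
  - destruct (Compare_dec.le_lt_dec a (S K)) as [Ha|Ha];
    [destruct (Compare_dec.le_lt_dec (a+c) (S K)) as [Hb|Hb]|].
    + assert (cnt a c (S K) = cnt a c K) by (unfold cnt; lia). rewrite H.
      specialize (H2 (S K)). lra.
    + assert (cnt a c (S K) = S (cnt a c K)) by (unfold cnt; lia). rewrite H, S_INR.
      specialize (H1 (S K)). assert (w <= f (S K)) by (apply H1; lia). lra.
    + assert (cnt a c (S K) = cnt a c K) by (unfold cnt; lia). rewrite H.
      specialize (H2 (S K)). lra.
Qed.

Definition blk (k : nat) : nat := Nat.log2 (S k).

Lemma pow2_pos_nat n : (1 <= 2 ^ n)%nat.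
Proof. induction n; simpl; lia. Qed.

Lemma blk_iff k n : blk k = n <-> (2 ^ n - 1 <= k < 2 ^ n - 1 + 2 ^ n)%nat.
Proof.
  pose proof (pow2_pos_nat n). unfold blk. split.
  - intro E. pose proof (Nat.log2_spec (S k) ltac:(lia)) as Hs. rewrite E in Hs.
    rewrite Nat.pow_succ_r' in Hs. lia.
  - intro H1. apply Nat.log2_unique; [lia|]. rewrite Nat.pow_succ_r'. lia.
Qed.

Lemma INR_pow2 n : INR (2 ^ n) = 2 ^ n.
Proof. rewrite pow_INR. simpl. f_equal. Qed.

Lemma sum_block_le n w (f : nat -> R) : 0 <= w ->
  (forall k, blk k = n -> f k <= w) -> (forall k, blk k <> n -> f k <= 0) ->
  forall K, sum_f_R0 f K <= 2 ^ n * w.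
Proof.
  intros Hw H1 H2 K. rewrite <- INR_pow2.
  apply (sum_interval_le' (2^n-1)); auto.
  - intros k Hk. apply H1, blk_iff; auto.
  - intros k Hk. apply H2. rewrite blk_iff. auto.
Qed.

Lemma sum_block_ge n w (f : nat -> R) : 0 <= w ->
  (forall k, blk k = n -> w <= f k) -> (forall k, 0 <= f k) ->
  2 ^ n * w <= sum_f_R0 f (2 ^ n - 1 + 2 ^ n - 1).
Proof.
  intros Hw H1 H2. rewrite <- INR_pow2. pose proof (pow2_pos_nat n).
  replace (2 ^ n)%nat with (cnt (2^n-1) (2^n) (2 ^ n - 1 + 2 ^ n - 1)) at 1
    by (unfold cnt; lia).
  apply sum_interval_ge; auto.
  intros k Hk. apply H1, blk_iff; auto.
Qed.

Lemma sum_init_le L w (f : nat -> R) : 0 <= w ->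
  (forall k, (k < L)%nat -> f k <= w) -> (forall k, (L <= k)%nat -> f k <= 0) ->
  forall K, sum_f_R0 f K <= INR L * w.
Proof.
  intros Hw H1 H2 K. apply (sum_interval_le' 0); auto.
  - intros k Hk; apply H1; lia.
  - intros k Hk; apply H2; lia.
Qed.

Definition tent (n : nat) (t : R) : R := Rmax 0 (1 - Rabs (2 ^ (n+2) * t - 3)).
Definition bb (p : R) (n : nat) : R := Rpower 2 (- INR n / p) * / (INR n + 1).
Definition gam (p : R) (t : R) : rseq := fun k => tent (blk k) t * bb p (blk k).
Definition Lr (r p : R) (n : nat) : R := Rpower 2 (INR n / r) * bb p n.

Lemma pow2_posR n : 0 < 2 ^ n.
Proof. apply pow_lt; lra. Qed.

Lemma tent_range n t : 0 <= tent n t <= 1.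
Proof.
  unfold tent. pose proof (Rabs_pos (2 ^ (n+2) * t - 3)). split; [apply Rmax_l|].
  apply Rmax_lub; lra.
Qed.

Lemma tent_pos n t : 0 < tent n t -> 2 < 2 ^ (n+2) * t < 4.
Proof.
  unfold tent, Rmax. destruct (Rle_dec 0 _); [|lra]. unfold Rabs; destruct Rcase_abs; lra.
Qed.

Lemma tent_zero n t : 2 ^ (n+2) * t <= 2 \/ 4 <= 2 ^ (n+2) * t -> tent n t = 0.
Proof.
  intro H. unfold tent, Rmax. destruct (Rle_dec 0 _); [|lra]. unfold Rabs in *; destruct Rcase_abs; lra.
Qed.

Lemma max0_lip a b : Rabs (Rmax 0 a - Rmax 0 b) <= Rabs (a - b).
Proof. unfold Rmax; destruct (Rle_dec 0 a); destruct (Rle_dec 0 b); unfold Rabs; repeat destruct Rcase_abs; lra. Qed.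

Lemma tent_lip n s t : Rabs (tent n s - tent n t) <= 2 ^ (n+2) * Rabs (s - t).
Proof.
  unfold tent. eapply Rle_trans; [apply max0_lip|].
  pose proof (pow2_posR (n+2)). set (c := 2 ^ (n+2)) in *.
  replace (1 - Rabs (c * s - 3) - (1 - Rabs (c * t - 3))) with
    (Rabs (c * t - 3) - Rabs (c * s - 3)) by ring.
  eapply Rle_trans; [apply Rabs_triang_inv2|].
  replace (c * t - 3 - (c * s - 3)) with (c * (t - s)) by ring.
  rewrite Rabs_mult, Rabs_right by lra. rewrite Rabs_minus_sym. lra.
Qed.

Lemma pow2_lt_mono m n : (m < n)%nat -> 2 * 2 ^ m <= 2 ^ n.
Proof.
  intro H. change (2 * 2 ^ m) with (2 ^ S m). apply Rle_pow; [lra|lia].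
Qed.

Lemma tent_unique n m t : 0 < tent n t -> 0 < tent m t -> n = m.
Proof.
  intros H1 H2. apply tent_pos in H1, H2.
  destruct (Nat.lt_trichotomy n m) as [Hl|[E|Hl]]; auto.
  - assert (2 * 2 ^ (n+2) <= 2 ^ (m+2)) by (apply pow2_lt_mono; lia).
    assert (0 < t) by (pose proof (pow2_posR (n+2)); nra). nra.
  - assert (2 * 2 ^ (m+2) <= 2 ^ (n+2)) by (apply pow2_lt_mono; lia).
    assert (0 < t) by (pose proof (pow2_posR (n+2)); nra). nra.
Qed.

Lemma tent_seg n m t : 2 <= 2 ^ (n+2) * t <= 4 -> m <> n -> tent m t = 0.
Proof.
  intros H Hmn. apply tent_zero.
  assert (0 <= t) by (pose proof (pow2_posR (n+2)); nra).
  destruct (Nat.lt_gt_cases m n) as [[Hl|Hl] _]; auto.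
  - left. assert (2 * 2 ^ (m+2) <= 2 ^ (n+2)) by (apply pow2_lt_mono; lia). nra.
  - right. assert (2 * 2 ^ (n+2) <= 2 ^ (m+2)) by (apply pow2_lt_mono; lia). nra.
Qed.

Lemma bb_pos p n : 0 < bb p n.
Proof.
  unfold bb. apply Rmult_lt_0_compat; [apply Rpower_pos|].
  apply Rinv_0_lt_compat. pose proof (pos_INR n). lra.
Qed.

Lemma neg_div n p : 0 < p -> - INR n / p = - (INR n / p).
Proof. intro; field; lra. Qed.

Lemma div_nonneg n p : 0 < p -> 0 <= INR n / p.
Proof. intro. apply Rmult_le_pos; [apply pos_INR|left; apply Rinv_0_lt_compat; lra]. Qed.

Lemma inv_le1 n : 0 < / (INR n + 1) <= 1.
Proof.
  pose proof (pos_INR n). split; [apply Rinv_0_lt_compat; lra|].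
  rewrite <- Rinv_1. apply Rinv_le_contravar; lra.
Qed.

Lemma bb_le1 p n : 0 < p -> bb p n <= 1.
Proof.
  intro Hp. unfold bb. pose proof (inv_le1 n).
  assert (Rpower 2 (- INR n / p) <= 1).
  { rewrite <- (Rpower_O 2) by lra. apply Rle_Rpower; [lra|].
    rewrite neg_div by lra. pose proof (div_nonneg n p Hp). lra. }
  pose proof (Rpower_pos 2 (- INR n / p)). nra.
Qed.

Lemma Lp_eq p n : 0 < p -> Lr p p n = / (INR n + 1).
Proof.
  intro Hp. unfold Lr, bb. rewrite <- Rmult_assoc, <- Rpower_plus.
  replace (INR n / p + - INR n / p) with 0 by (field; lra). rewrite Rpower_O by lra. ring.
Qed.

Lemma gam_range p t k : 0 <= gam p t k <= bb p (blk k).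
Proof.
  unfold gam. pose proof (tent_range (blk k) t). pose proof (bb_pos p (blk k)). nra.
Qed.

Lemma gam_support p t : exists n, forall k, blk k <> n -> gam p t k = 0.
Proof.
  destruct (Classical_Prop.classic (exists n, 0 < tent n t)) as [[n Hn]|Hno].
  - exists n. intros k Hk. unfold gam.
    assert (H0 : tent (blk k) t = 0).
    { pose proof (tent_range (blk k) t). destruct (Rle_lt_or_eq_dec 0 (tent (blk k) t)) as [H0|H0]; try lra.
      exfalso. apply Hk. eapply tent_unique; eauto. }
    rewrite H0; ring.
  - exists 0%nat. intros k _. unfold gam.
    assert (H0 : tent (blk k) t = 0).
    { pose proof (tent_range (blk k) t). destruct (Rle_lt_or_eq_dec 0 (tent (blk k) t)) as [H0|H0]; try lra.
      exfalso. apply Hno. eauto. }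
    rewrite H0; ring.
Qed.

Lemma block_norm r p n a (z : rseq) : 0 < r -> 0 <= a ->
  (forall k, blk k = n -> Rabs (z k) <= a * bb p n) ->
  (forall k, blk k <> n -> z k = 0) ->
  forall K, sum_f_R0 (fun k => rpow (Rabs (z k)) r) K <= rpow (a * Lr r p n) r.
Proof.
  intros Hr Ha H1 H2 K. pose proof (bb_pos p n).
  replace (a * Lr r p n) with (Rpower 2 (INR n / r) * (a * bb p n)) by (unfold Lr; ring).
  rewrite <- pow2_rpow by (try apply Rmult_le_pos; lra).
  apply sum_block_le.
  - apply rpow_ge0.
  - intros k Hk. apply rpow_le; auto. split; [apply Rabs_pos|]. subst; auto.
  - intros k Hk. rewrite H2, Rabs_R0, rpow_0 by auto. lra.
Qed.

Lemma block_norm_ge r p n a (z : rseq) : 0 < r -> 0 <= a ->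
  (forall k, blk k = n -> a * bb p n <= Rabs (z k)) ->
  rpow (a * Lr r p n) r <= sum_f_R0 (fun k => rpow (Rabs (z k)) r) (2 ^ n - 1 + 2 ^ n - 1).
Proof.
  intros Hr Ha H1. pose proof (bb_pos p n).
  replace (a * Lr r p n) with (Rpower 2 (INR n / r) * (a * bb p n)) by (unfold Lr; ring).
  rewrite <- pow2_rpow by (try apply Rmult_le_pos; lra).
  apply sum_block_ge.
  - apply rpow_ge0.
  - intros k Hk. apply rpow_le; auto. split; [apply Rmult_le_pos; lra|]. subst; auto.
  - intros k. apply rpow_ge0.
Qed.

Lemma sum_plus' (f g : nat -> R) N : sum_f_R0 (fun k => f k + g k) N = sum_f_R0 f N + sum_f_R0 g N.
Proof. induction N; simpl; [ring|rewrite IHN; ring]. Qed.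

Lemma blk_le_iff k N : (blk k <= N)%nat <-> (k < 2 ^ (S N) - 1)%nat.
Proof.
  unfold blk. pose proof (Nat.log2_lt_pow2 (S k) (S N) ltac:(lia)).
  pose proof (pow2_pos_nat (S N)). split; intro H1.
  - assert (Nat.log2 (S k) < S N)%nat by lia. apply H in H2. lia.
  - assert (S k < 2 ^ S N)%nat by lia. apply H in H2. lia.
Qed.

Lemma rpow_diff a b r : 0 <= a -> 0 <= b -> 0 < r -> rpow (Rabs (a - b)) r <= rpow a r + rpow b r.
Proof.
  intros Ha Hb Hr. pose proof (rpow_ge0 a r). pose proof (rpow_ge0 b r).
  destruct (Rle_dec a b).
  - assert (rpow (Rabs (a-b)) r <= rpow b r); [|lra].
    apply rpow_le; auto. split; [apply Rabs_pos|]. unfold Rabs; destruct Rcase_abs; lra.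
  - assert (rpow (Rabs (a-b)) r <= rpow a r); [|lra].
    apply rpow_le; auto. split; [apply Rabs_pos|]. unfold Rabs; destruct Rcase_abs; lra.
Qed.

Lemma inv_mono n N : (N < n)%nat -> / (INR n + 1) <= / (INR N + 2).
Proof.
  intro H. assert (INR (S N) <= INR n) by (apply le_INR; lia). rewrite S_INR in H0. pose proof (pos_INR N).
  apply Rinv_le_contravar; lra.
Qed.

Lemma gam_norm p t K : 1 < p -> sum_f_R0 (fun k => rpow (Rabs (gam p t k)) p) K <= 1.
Proof.
  intro Hp. destruct (gam_support p t) as [n Hn].
  eapply Rle_trans; [apply (block_norm p p n 1); try lra|].
  - intros k Hk. rewrite Rabs_right by (apply Rle_ge, gam_range). rewrite Rmult_1_l, <- Hk.
    apply gam_range.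
  - auto.
  - rewrite Rmult_1_l, Lp_eq by lra. eapply Rle_trans; [apply (rpow_le p _ 1)|rewrite rpow_1; lra]; [lra|].
    pose proof (inv_le1 n). lra.
Qed.

Lemma gam_tail p t N K : 1 < p ->
  sum_f_R0 (fun k => if Compare_dec.lt_dec k (2 ^ (S N) - 1) then 0 else rpow (gam p t k) p) K
  <= rpow (/ (INR N + 2)) p.
Proof.
  intro Hp. destruct (gam_support p t) as [n Hn].
  destruct (Compare_dec.le_lt_dec n N).
  - eapply Rle_trans; [apply (sum_init_le 0 0); try lra|].
    + intros; lia.
    + intros k _. destruct (Compare_dec.lt_dec k (2 ^ S N - 1)); [lra|].
      rewrite Hn, rpow_0; [lra|]. intro E. apply n0, blk_le_iff. lia.
    + rewrite Rmult_0_l. apply rpow_ge0.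
  - eapply Rle_trans with (sum_f_R0 (fun k => rpow (Rabs (gam p t k)) p) K).
    + apply sum_Rle. intros k _. destruct Compare_dec.lt_dec; [apply rpow_ge0|].
      rewrite Rabs_right by (apply Rle_ge, gam_range). lra.
    + eapply Rle_trans; [apply (block_norm p p n 1); try lra|].
      * intros k Hk. rewrite Rabs_right by (apply Rle_ge, gam_range). rewrite Rmult_1_l, <- Hk.
        apply gam_range.
      * auto.
      * rewrite Rmult_1_l, Lp_eq by lra. apply rpow_le; [lra|].
        pose proof (inv_le1 n). pose proof (inv_mono n N l). lra.
Qed.

Lemma gam_cont p : 1 < p -> lr_continuous_on01 p (gam p).
Proof.
  intro Hp. split.
  - intros t _. exists 1. split; [lra|]. intro K. rewrite rpow_1. apply gam_norm; auto.
  - intros t Ht eps He.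
    destruct (INR_unbounded (4 / eps)) as [N HN].
    set (P := 2 ^ S N). assert (HP : 0 < P) by apply pow2_posR.
    set (w1 := eps / (2 * P)).
    assert (Hw1 : 0 < w1) by (unfold w1; apply Rdiv_lt_0_compat; lra).
    pose proof (pow2_posR (N+2)).
    exists (w1 / 2 ^ (N+2)). split; [apply Rdiv_lt_0_compat; lra|].
    intros s Hs Hst. split; [lra|]. intro K. unfold seq_sub.
    set (L := (2 ^ S N - 1)%nat).
    set (g1 := fun k => if Compare_dec.lt_dec k L then rpow w1 p else 0).
    set (g2 := fun u k => if Compare_dec.lt_dec k L then 0 else rpow (gam p u k) p).
    apply Rle_trans with (sum_f_R0 (fun k => g1 k + (g2 s k + g2 t k)) K).
    + apply sum_Rle. intros k _. unfold g1, g2. destruct (Compare_dec.lt_dec k L).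
      * assert (Rabs (gam p s k - gam p t k) <= w1).
        { unfold gam. rewrite <- Rmult_minus_distr_r, Rabs_mult.
          rewrite (Rabs_right (bb p _)) by (left; apply bb_pos).
          pose proof (tent_lip (blk k) s t). pose proof (bb_le1 p (blk k) ltac:(lra)).
          pose proof (bb_pos p (blk k)).
          assert (2 ^ (blk k + 2) <= 2 ^ (N+2)).
          { apply Rle_pow; [lra|]. apply blk_le_iff in l. lia. }
          assert (Rabs (s - t) * 2 ^ (N+2) <= w1).
          { apply Rlt_le in Hst. unfold Rdiv in Hst.
            apply (Rmult_le_compat_r (2 ^ (N+2))) in Hst; [|lra].
            rewrite Rmult_assoc, Rinv_l in Hst by lra. lra. }
          pose proof (Rabs_pos (s-t)). pose proof (Rabs_pos (tent (blk k) s - tent (blk k) t)).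
          assert (Rabs (tent (blk k) s - tent (blk k) t) <= 2 ^ (N+2) * Rabs (s - t)) by nra.
          nra. }
        pose proof (rpow_ge0 (Rabs (gam p s k - gam p t k)) p). assert (rpow (Rabs (gam p s k - gam p t k)) p <= rpow w1 p) by (apply rpow_le; [lra|]; split; [apply Rabs_pos|auto]). lra.
      * rewrite Rplus_0_l. apply rpow_diff; try lra; apply gam_range.
    + rewrite sum_plus', sum_plus'.
      assert (A1 : sum_f_R0 g1 K <= rpow eps p / 2).
      { eapply Rle_trans; [apply (sum_init_le L (rpow w1 p)); [apply rpow_ge0| |]|].
        - intros k Hk. unfold g1. destruct Compare_dec.lt_dec; [lra|lia].
        - intros k Hk. unfold g1. destruct Compare_dec.lt_dec; [lia|lra].
        - assert (INR L <= P).
          { unfold L, P. rewrite <- INR_pow2. apply le_INR. lia. }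
          unfold w1. unfold Rdiv at 1. rewrite rpow_mult by (try left; try apply Rinv_0_lt_compat; lra).
          assert (rpow (/ (2 * P)) p <= / (2 * P)).
          { apply rpow_small; [|lra]. split; [left; apply Rinv_0_lt_compat; lra|].
            rewrite <- Rinv_1. apply Rinv_le_contravar; [lra|].
            unfold P. assert (1 <= 2 ^ S N) by (rewrite <- INR_pow2, <- INR_1; apply le_INR, pow2_pos_nat). lra. }
          pose proof (rpow_ge0 eps p). pose proof (rpow_ge0 (/ (2*P)) p).
          pose proof (pos_INR L).
          apply Rle_trans with (P * (rpow eps p * / (2 * P))); [|right; field; lra].
          apply Rmult_le_compat; try lra; try nra. }
      assert (A2 : forall u, sum_f_R0 (g2 u) K <= rpow eps p / 4).
      { intro u. eapply Rle_trans; [apply gam_tail; auto|].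
        assert (/ (INR N + 2) <= eps * / 4).
        { assert (4 / eps < INR N + 2) by lra.
          apply Rle_trans with (/ (4 / eps)); [apply Rinv_le_contravar; [apply Rdiv_lt_0_compat|]; lra|].
          right. field. lra. }
        eapply Rle_trans; [apply rpow_le; [lra|split; [left; apply Rinv_0_lt_compat; pose proof (pos_INR N); lra|]; exact H0]|].
        rewrite rpow_mult by lra.
        assert (rpow (/4) p <= /4) by (apply rpow_small; lra).
        pose proof (rpow_ge0 eps p). nra. }
      pose proof (A2 s). pose proof (A2 t). lra.
Qed.

Fixpoint fsum (f : nat -> R) (n : nat) : R :=
  match n with O => 0 | S m => fsum f m + f m end.

Lemma sum_fsum f n : sum_f_R0 f n = fsum f (S n).
Proof. induction n; simpl in *; [ring|rewrite IHn; ring]. Qed.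

Lemma fsum_add f a b : fsum f (a + b) = fsum f a + fsum (fun j => f (a + j)%nat) b.
Proof. induction b; simpl; [rewrite Nat.add_0_r; ring|]. rewrite Nat.add_succ_r. simpl. rewrite IHb. ring. Qed.

Lemma fsum_ext f g n : (forall i, (i < n)%nat -> f i = g i) -> fsum f n = fsum g n.
Proof. induction n; intro H; simpl; auto. rewrite IHn by (intros; apply H; lia). rewrite (H n) by lia. auto. Qed.

Lemma fsum_const c n : fsum (fun _ => c) n = INR n * c.
Proof. induction n; [simpl; ring|]. change (fsum (fun _ => c) (S n)) with (fsum (fun _ => c) n + c). rewrite IHn, S_INR. ring. Qed.

Lemma fsum_scal c f n : fsum (fun i => c * f i) n = c * fsum f n.
Proof. induction n; simpl; [ring|rewrite IHn; ring]. Qed.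

Lemma fsum_le f g n : (forall i, (i < n)%nat -> f i <= g i) -> fsum f n <= fsum g n.
Proof. induction n; intro H; simpl; [lra|]. assert (f n <= g n) by (apply H; lia).
  assert (fsum f n <= fsum g n) by (apply IHn; intros; apply H; lia). lra. Qed.

Lemma fsum_div f K m : (1 <= K)%nat -> fsum (fun i => f (i / K)%nat) (K * m) = INR K * fsum f m.
Proof.
  intro HK. induction m.
  - rewrite Nat.mul_0_r. simpl. ring.
  - replace (K * S m)%nat with (K * m + K)%nat by lia. rewrite fsum_add, IHm.
    rewrite (fsum_ext (fun j => f ((K*m+j)/K)%nat) (fun _ => f m) K).
    + rewrite fsum_const. change (fsum f (S m)) with (fsum f m + f m). ring.
    + intros i Hi. f_equal. symmetry. apply (Nat.div_unique _ _ _ i); lia.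
Qed.

Lemma sum_mono_ext (d : nat -> R) I m : (forall i, 0 <= d i) -> sum_f_R0 d I <= sum_f_R0 d (I + m).
Proof. intro H. induction m; [rewrite Nat.add_0_r; lra|]. rewrite Nat.add_succ_r. simpl. specialize (H (S (I+m))). lra. Qed.

Lemma sum_zero_ext (d : nat -> R) L m : (forall i, (L < i)%nat -> d i = 0) -> sum_f_R0 d (L + m) = sum_f_R0 d L.
Proof. intro H. induction m; [rewrite Nat.add_0_r; lra|]. rewrite Nat.add_succ_r. simpl. rewrite H by lia. lra. Qed.

Lemma sum_trunc (d : nat -> R) L I : (forall i, 0 <= d i) -> (forall i, (L < i)%nat -> d i = 0) ->
  sum_f_R0 d I <= sum_f_R0 d L.
Proof.
  intros H1 H2. destruct (Compare_dec.le_lt_dec I L).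
  - replace L with (I + (L - I))%nat by lia. apply sum_mono_ext; auto.
  - replace I with (L + (I - L))%nat by lia. rewrite sum_zero_ext; auto. lra.
Qed.

Lemma seg_search N t : 2 <= 2 ^ (N+2) * t -> t <= 1 -> exists n, (n <= N)%nat /\ 2 <= 2 ^ (n+2) * t <= 4.
Proof.
  induction N; intros H1 H2.
  - exists 0%nat. simpl in *. split; [lia|lra].
  - destruct (Rle_dec 2 (2 ^ (N+2) * t)).
    + destruct (IHN r H2) as [n [Hn Hn2]]. exists n; split; auto.
    + exists (S N). split; auto. replace (S N + 2)%nat with (S (N + 2)) in * by lia. simpl in *. lra.
Qed.

Lemma piece_search c u m : 0 < c -> (1 <= m)%nat -> 0 <= u -> u <= c * INR m ->
  exists r, (r < m)%nat /\ c * INR r <= u <= c * (INR r + 1).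
Proof.
  intros Hc. induction m; intros Hm Hu H; [lia|].
  destruct (Nat.eq_dec m 0).
  - subst. exists 0%nat. simpl in *. split; [lia|lra].
  - destruct (Rle_dec u (c * INR m)).
    + destruct IHm as [r0 [Hr Hr2]]; auto; try lia. exists r0; split; auto.
    + exists m. split; [lia|]. rewrite S_INR in H. lra.
Qed.

Definition Gam (p : R) : rset := fun x => exists t, 0 <= t <= 1 /\ x = gam p t.

Lemma inv_pq p q : 0 < p -> p <= q -> / q <= / p.
Proof. intros. apply Rinv_le_contravar; lra. Qed.

Lemma Lq_eq q p n : 0 < p -> 0 < q -> Lr q p n = Rpower 2 (INR n * (/q - /p)) * / (INR n + 1).
Proof.
  intros. unfold Lr, bb. rewrite <- Rmult_assoc, <- Rpower_plus. f_equal. f_equal. field; lra.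
Qed.

Lemma Lq_le_inv q p n : 0 < p -> p <= q -> Lr q p n <= / (INR n + 1).
Proof.
  intros Hp Hq. rewrite Lq_eq by lra. pose proof (inv_pq p q Hp Hq). pose proof (pos_INR n).
  assert (Rpower 2 (INR n * (/q - /p)) <= 1).
  { rewrite <- (Rpower_O 2) by lra. apply Rle_Rpower; [lra|]. nra. }
  pose proof (inv_le1 n). pose proof (Rpower_pos 2 (INR n * (/q - /p))). nra.
Qed.

Lemma Lq_pos q p n : 0 < Lr q p n.
Proof. unfold Lr. apply Rmult_lt_0_compat; [apply Rpower_pos|apply bb_pos]. Qed.

Lemma Lq_le_geo q p n : 0 < p -> p <= q -> Lr q p n <= (Rpower 2 (/q - /p)) ^ n.
Proof.
  intros Hp Hq. rewrite Lq_eq by lra. rewrite <- Rpower_pow by apply Rpower_pos.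
  rewrite Rpower_mult. replace ((/q - /p) * INR n) with (INR n * (/q - /p)) by ring.
  pose proof (inv_le1 n). pose proof (Rpower_pos 2 (INR n * (/q - /p))). nra.
Qed.

Lemma tail_zero p t N k : 0 <= t -> 2 ^ (N+2) * t <= 2 -> (blk k <= N)%nat -> gam p t k = 0.
Proof.
  intros H0 H1 H2. unfold gam. rewrite tent_zero; [ring|]. left.
  assert (2 ^ (blk k + 2) <= 2 ^ (N+2)) by (apply Rle_pow; [lra|lia]). nra.
Qed.

Lemma tail_norm p q t N K : 0 < p -> p <= q -> 0 <= t -> 2 ^ (N+2) * t <= 2 ->
  sum_f_R0 (fun k => rpow (Rabs (gam p t k)) q) K <= rpow (/ (INR N + 2)) q.
Proof.
  intros Hp Hq H0 H1. destruct (gam_support p t) as [n Hn].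
  destruct (Compare_dec.le_lt_dec n N).
  - eapply Rle_trans; [apply (sum_init_le 0 0); try lra|].
    + intros; lia.
    + intros k _. destruct (Nat.eq_dec (blk k) n) as [E|E].
      * rewrite (tail_zero p t N k) by (auto; lia). rewrite Rabs_R0, rpow_0. lra.
      * rewrite Hn, Rabs_R0, rpow_0 by auto. lra.
    + rewrite Rmult_0_l. apply rpow_ge0.
  - eapply Rle_trans; [apply (block_norm q p n 1); try lra|].
    + intros k Hk. rewrite Rabs_right by (apply Rle_ge, gam_range). rewrite Rmult_1_l, <- Hk.
      apply gam_range.
    + auto.
    + rewrite Rmult_1_l. apply rpow_le; [lra|]. split; [left; apply Lq_pos|].
      pose proof (Lq_le_inv q p n Hp Hq). pose proof (inv_mono n N l). lra.
Qed.

Lemma tail_diam p q t t' N : 0 < p -> p <= q -> 1 <= q -> 0 <= t -> 2 ^ (N+2) * t <= 2 ->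
  0 <= t' -> 2 ^ (N+2) * t' <= 2 ->
  lr_norm_le q (seq_sub (gam p t) (gam p t')) (2 / (INR N + 2)).
Proof.
  intros Hp Hq Hq1 H0 H1 H0' H1'. pose proof (pos_INR N).
  split; [left; apply Rdiv_lt_0_compat; lra|]. intro K. unfold seq_sub.
  apply Rle_trans with (sum_f_R0 (fun k => rpow (Rabs (gam p t k)) q + rpow (Rabs (gam p t' k)) q) K).
  - apply sum_Rle. intros k _. rewrite (Rabs_right (gam p t k)) by (apply Rle_ge, gam_range).
    rewrite (Rabs_right (gam p t' k)) by (apply Rle_ge, gam_range).
    apply rpow_diff; try lra; apply gam_range.
  - rewrite sum_plus'. pose proof (tail_norm p q t N K Hp Hq H0 H1).
    pose proof (tail_norm p q t' N K Hp Hq H0' H1').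
    unfold Rdiv. rewrite rpow_mult by (try left; try apply Rinv_0_lt_compat; lra).
    rewrite (rpow_pos 2) by lra. pose proof (Rpower2_ge q Hq1).
    pose proof (rpow_ge0 (/ (INR N + 2)) q). nra.
Qed.

Lemma piece_diam p q n c t t' : 0 < p -> 0 < q -> 0 < c ->
  2 <= 2 ^ (n+2) * t <= 4 -> 2 <= 2 ^ (n+2) * t' <= 4 ->
  Rabs (2 ^ (n+2) * t - 2 ^ (n+2) * t') <= c ->
  lr_norm_le q (seq_sub (gam p t) (gam p t')) (c * Lr q p n).
Proof.
  intros Hp Hq Hc H1 H2 H3. pose proof (Lq_pos q p n).
  split; [left; apply Rmult_lt_0_compat; lra|]. intro K.
  apply (block_norm q p n c); try lra.
  - intros k Hk. unfold seq_sub, gam. rewrite Hk.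
    rewrite <- Rmult_minus_distr_r, Rabs_mult, (Rabs_right (bb p n)) by (left; apply bb_pos).
    apply Rmult_le_compat_r; [left; apply bb_pos|].
    unfold tent. eapply Rle_trans; [apply max0_lip|].
    replace (1 - Rabs (2 ^ (n + 2) * t - 3) - (1 - Rabs (2 ^ (n + 2) * t' - 3))) with
      (Rabs (2 ^ (n + 2) * t' - 3) - Rabs (2 ^ (n + 2) * t - 3)) by ring.
    eapply Rle_trans; [apply Rabs_triang_inv2|].
    replace (2 ^ (n + 2) * t' - 3 - (2 ^ (n + 2) * t - 3)) with (-(2 ^ (n+2) * t - 2 ^ (n+2) * t')) by ring.
    rewrite Rabs_Ropp. auto.
  - intros k Hk. unfold seq_sub, gam.
    rewrite (tent_seg n (blk k) t), (tent_seg n (blk k) t') by auto. ring.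
Qed.

Lemma H1_upper p q : 1 < p -> p < q -> H1_finite q (Gam p).
Proof.
  intros Hp Hpq.
  set (rho := Rpower 2 (/q - /p)).
  assert (Hrho : 0 < rho < 1).
  { split; [apply Rpower_pos|]. unfold rho. rewrite <- (Rpower_O 2) by lra.
    apply Rpower_lt; [lra|]. assert (/q < /p) by (apply Rinv_lt_contravar; nra). lra. }
  exists (2 / (1 - rho)). intros delta eps Hd He.
  destruct (INR_unbounded (2 / Rmin delta eps)) as [N HN].
  assert (Hmin : 0 < Rmin delta eps) by (apply Rmin_glb_lt; lra).
  assert (HN2 : 2 / (INR N + 2) <= Rmin delta eps).
  { assert (2 / Rmin delta eps < INR N + 2) by lra.
    apply (Rmult_lt_compat_r (Rmin delta eps)) in H; auto.
    unfold Rdiv in *. rewrite Rmult_assoc, Rinv_l in H by lra.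
    pose proof (pos_INR N).
    apply (Rmult_le_reg_r (INR N + 2)); [lra|]. rewrite Rmult_assoc, Rinv_l by lra. lra. }
  pose proof (Rmin_l delta eps). pose proof (Rmin_r delta eps).
  destruct (INR_unbounded (2 / delta)) as [K HK].
  assert (HK0 : 0 < INR K) by (assert (0 < 2/delta) by (apply Rdiv_lt_0_compat; lra); lra).
  assert (HK1 : (1 <= K)%nat) by (destruct K; [simpl in HK0; lra|lia]).
  set (c := 2 / INR K).
  assert (Hc : 0 < c) by (apply Rdiv_lt_0_compat; lra).
  assert (Hcd : c <= delta).
  { unfold c. apply (Rmult_le_reg_r (INR K)); auto. unfold Rdiv. rewrite Rmult_assoc, Rinv_l by lra.
    apply (Rmult_lt_compat_r delta) in HK; auto. unfold Rdiv in HK. rewrite Rmult_assoc, Rinv_l in HK by lra. lra. }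
  set (KN := (K * S N)%nat).
  set (C := fun (i : nat) (x : rseq) =>
    ((i < KN)%nat /\ exists t, 0 <= t <= 1 /\
       2 + c * INR (i mod K) <= 2 ^ (i / K + 2) * t <= 2 + c * (INR (i mod K) + 1) /\ x = gam p t)
    \/ (i = KN /\ exists t, 0 <= t <= 1 /\ 2 ^ (N+2) * t <= 2 /\ x = gam p t)).
  set (d := fun i : nat => if Compare_dec.lt_dec i KN then c * Lr q p (i / K)
                           else if Nat.eq_dec i KN then 2 / (INR N + 2) else 0).
  assert (Hd0 : forall i, 0 <= d i).
  { intro i. unfold d. pose proof (pos_INR N). destruct Compare_dec.lt_dec.
    - pose proof (Lq_pos q p (i/K)). nra.
    - destruct Nat.eq_dec; [left; apply Rdiv_lt_0_compat|]; lra. }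
  exists C, d. split; [|split; [|split]].
  -
    intros x [t [Ht ->]]. destruct (Rle_dec (2 ^ (N+2) * t) 2) as [Hl|Hl].
    + exists KN. right. split; auto. exists t. auto.
    + destruct (seg_search N t) as [n [Hn Hn2]]; try lra.
      destruct (piece_search c (2 ^ (n+2) * t - 2) K) as [r [Hr Hr2]]; try lra; auto.
      { unfold c. field_simplify; lra. }
      exists (K * n + r)%nat. left. split; [unfold KN; nia|].
      assert (E1 : ((K * n + r) / K)%nat = n) by (symmetry; apply (Nat.div_unique _ _ _ r); lia).
      assert (E2 : ((K * n + r) mod K)%nat = r) by (symmetry; apply (Nat.mod_unique _ _ n); lia).
      rewrite E1, E2. exists t. repeat split; auto; lra.
  - intro i. split; auto. unfold d. destruct Compare_dec.lt_dec.
    + pose proof (Lq_le_inv q p (i/K) ltac:(lra) ltac:(lra)). pose proof (inv_le1 (i/K)).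
      pose proof (Lq_pos q p (i/K)). nra.
    + destruct Nat.eq_dec; lra.
  - intros i x y Hx Hy. destruct Hx as [[Hi [t [Ht [Ht2 ->]]]]|[Hi [t [Ht [Ht2 ->]]]]];
    destruct Hy as [[Hi' [t' [Ht' [Ht2' ->]]]]|[Hi' [t' [Ht' [Ht2' ->]]]]]; try lia.
    + unfold d. destruct Compare_dec.lt_dec; [|lia].
      assert (Hr : (i mod K < K)%nat) by (apply Nat.mod_upper_bound; lia).
      assert (INR (i mod K) + 1 <= INR K) by (rewrite <- S_INR; apply le_INR; lia).
      assert (c * INR K = 2) by (unfold c; field; lra).
      assert (0 <= c * INR (i mod K)) by (pose proof (pos_INR (i mod K)); nra).
      apply piece_diam; try lra.
      * split; nra.
      * split; nra.
      * unfold Rabs; destruct Rcase_abs; lra.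
    + unfold d. destruct Compare_dec.lt_dec; [lia|]. destruct Nat.eq_dec; [|lia].
      apply tail_diam; lra.
  - intro I. eapply Rle_trans; [apply (sum_trunc d KN); auto|].
    { intros i Hi. unfold d. destruct Compare_dec.lt_dec; [lia|]. destruct Nat.eq_dec; [lia|auto]. }
    rewrite sum_fsum. simpl fsum.
    assert (Hdk : d KN = 2 / (INR N + 2)).
    { unfold d. destruct Compare_dec.lt_dec; [lia|]. destruct Nat.eq_dec; [auto|lia]. }
    rewrite Hdk.
    rewrite (fsum_ext d (fun i => c * Lr q p (i / K)%nat)).
    2: { intros i Hi. unfold d. destruct Compare_dec.lt_dec; [auto|lia]. }
    unfold KN. replace (fsum (fun i => c * Lr q p (i/K)%nat) (K * S N)) with (INR K * fsum (fun n => c * Lr q p n) (S N))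
      by (symmetry; apply (fsum_div (fun n => c * Lr q p n)); auto).
    rewrite fsum_scal.
    assert (fsum (Lr q p) (S N) <= / (1 - rho)).
    { apply Rle_trans with (fsum (fun n => rho ^ n) (S N)).
      - apply fsum_le. intros. apply Lq_le_geo; lra.
      - rewrite <- sum_fsum, tech3 by lra. pose proof (pow_lt rho (S N) ltac:(lra)).
        unfold Rdiv. pose proof (Rinv_0_lt_compat (1 - rho) ltac:(lra)). nra. }
    assert (INR K * (c * fsum (Lr q p) (S N)) = 2 * fsum (Lr q p) (S N)) by (unfold c; field; lra).
    rewrite H2. unfold Rdiv at 1. lra.
Qed.

Lemma sum_incr_term (f g : nat -> R) k N : (forall i, f i <= g i) -> (k <= N)%nat ->
  sum_f_R0 f N + (g k - f k) <= sum_f_R0 g N.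
Proof.
  intros H Hk. induction N.
  - assert (k = 0%nat) by lia. subst. simpl. lra.
  - simpl. destruct (Nat.eq_dec k (S N)).
    + subst. assert (sum_f_R0 f N <= sum_f_R0 g N) by (apply sum_Rle; auto). lra.
    + assert (k <= N)%nat by lia. specialize (IHN H0). specialize (H (S N)). lra.
Qed.

Lemma lam_lin u v a x y : u < x -> x <= y -> y < v -> a <= x ->
  Rmax 0 (Rmin v y - Rmax u a) - Rmax 0 (Rmin v x - Rmax u a) = y - x.
Proof. intros. unfold Rmax, Rmin; repeat destruct Rle_dec; lra. Qed.

Lemma lam_mono u v a x y : x <= y -> Rmax 0 (Rmin v x - Rmax u a) <= Rmax 0 (Rmin v y - Rmax u a).
Proof. intros. unfold Rmax, Rmin; repeat destruct Rle_dec; lra. Qed.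

Lemma lam_ge0 u v a x : 0 <= Rmax 0 (Rmin v x - Rmax u a).
Proof. apply Rmax_l. Qed.

Lemma creep (u v : nat -> R) a b : a <= b ->
  (forall t, a <= t <= b -> exists i, u i < t < v i) ->
  exists N, b - a <= sum_f_R0 (fun i => Rmax 0 (v i - u i)) N.
Proof.
  intros Hab Hcov.
  set (lam := fun i x => Rmax 0 (Rmin (v i) x - Rmax (u i) a)).
  set (E := fun x => a <= x <= b /\ exists N, x - a <= sum_f_R0 (fun i => lam i x) N).
  assert (Ea : E a).
  { split; [lra|]. exists 0%nat. simpl. unfold lam. pose proof (lam_ge0 (u 0%nat) (v 0%nat) a a). lra. }
  assert (Hb : bound E) by (exists b; intros x [Hx _]; lra).
  destruct (completeness E Hb (ex_intro _ a Ea)) as [c [Hc1 Hc2]].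
  assert (Hac : a <= c) by (apply Hc1; auto).
  assert (Hcb : c <= b) by (apply Hc2; intros x [Hx _]; lra).
  destruct (Hcov c (conj Hac Hcb)) as [k [Hk1 Hk2]].
  assert (Hx : exists x, E x /\ u k < x).
  { apply NNPP. intro Hno. assert (c <= u k); [|lra].
    apply Hc2. intros x Ex. destruct (Rle_dec x (u k)); auto. exfalso. apply Hno. exists x. split; auto; lra. }
  destruct Hx as [x [[Hx1 [N HN]] Hxu]].
  assert (Hxc : x <= c) by (apply Hc1; split; auto; exists N; auto).
  set (y := Rmin b ((c + v k) / 2)).
  assert (Hy1 : c <= y) by (unfold y, Rmin; destruct Rle_dec; lra).
  assert (Hy2 : y <= b) by (unfold y; apply Rmin_l).
  assert (Hy3 : y < v k) by (unfold y, Rmin; destruct Rle_dec; lra).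
  assert (Ey : E y).
  { split; [lra|]. exists (Nat.max N k).
    pose proof (sum_incr_term (fun i => lam i x) (fun i => lam i y) k (Nat.max N k)) as H1.
    assert (lam k y - lam k x = y - x) by (unfold lam; apply lam_lin; lra).
    assert (sum_f_R0 (fun i => lam i x) N <= sum_f_R0 (fun i => lam i x) (Nat.max N k)).
    { replace (Nat.max N k) with (N + (Nat.max N k - N))%nat by lia. apply sum_mono_ext.
      intro; apply lam_ge0. }
    assert (sum_f_R0 (fun i => lam i x) (Nat.max N k) + (lam k y - lam k x) <=
            sum_f_R0 (fun i => lam i y) (Nat.max N k)).
    { apply H1; [|lia]. intro i. unfold lam. apply lam_mono. lra. }
    lra. }
  assert (y <= c) by (apply Hc1; auto).
  assert (y = b) by (unfold y in *; unfold Rmin in *; destruct Rle_dec; lra).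
  rewrite H0 in Ey. destruct Ey as [_ [N' HN']]. exists N'.
  eapply Rle_trans; [exact HN'|]. apply sum_Rle. intros i _. unfold lam, Rmax, Rmin; repeat destruct Rle_dec; lra.
Qed.

Lemma ln_1x x : 0 < x -> ln (1 + x) < x.
Proof.
  intro. rewrite <- (ln_exp x) at 2. apply ln_increasing; [lra|]. apply exp_ineq1; lra.
Qed.

Lemma harm N : ln (INR N + 2) <= sum_f_R0 (fun n => / (INR n + 1)) N.
Proof.
  induction N.
  - simpl. replace (0 + 2) with (1 + 1) by ring. replace (/ (0 + 1)) with 1 by field. pose proof (ln_1x 1 ltac:(lra)). lra.
  - change (sum_f_R0 (fun n => / (INR n + 1)) (S N)) with (sum_f_R0 (fun n => / (INR n + 1)) N + / (INR (S N) + 1)). rewrite !S_INR. pose proof (pos_INR N).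
    replace (INR N + 1 + 2) with ((INR N + 2) * (1 + / (INR N + 2))) by (field; lra).
    rewrite ln_mult by (try (assert (0 < / (INR N + 2)) by (apply Rinv_0_lt_compat; lra)); lra).
    pose proof (ln_1x (/ (INR N + 2)) ltac:(apply Rinv_0_lt_compat; lra)).
    replace (INR N + 1 + 1) with (INR N + 2) by ring. lra.
Qed.

Lemma harm_unb X : exists N, X < ln (INR N + 2).
Proof.
  destruct (INR_unbounded (exp X)) as [N HN]. exists N.
  rewrite <- (ln_exp X) at 1. apply ln_increasing; [apply exp_pos|lra].
Qed.

Lemma fsum_search (f : nat -> R) m y : (forall i, 0 <= f i) -> 0 <= y <= fsum f (S m) ->
  exists n, (n <= m)%nat /\ fsum f n <= y <= fsum f (S n).
Proof.
  intros Hf. induction m; intro H.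
  - exists 0%nat. simpl in *. split; [lia|lra].
  - destruct (Rle_dec y (fsum f (S m))).
    + destruct IHm as [n [Hn Hn2]]; [lra|]. exists n; split; auto.
    + exists (S m). split; auto. lra.
Qed.

Definition Pt p n s := gam p ((2 + s) / 2 ^ (n+2)).

Lemma Pt_time n s : 0 <= s <= 1 -> 0 <= (2 + s) / 2 ^ (n+2) <= 1 /\ 2 ^ (n+2) * ((2 + s) / 2 ^ (n+2)) = 2 + s.
Proof.
  intro Hs. pose proof (pow2_posR (n+2)).
  assert (2 ^ 2 <= 2 ^ (n+2)) by (apply Rle_pow; [lra|lia]). simpl in H0.
  split; [split|field; lra].
  - apply Rmult_le_pos; [lra|left; apply Rinv_0_lt_compat; lra].
  - apply (Rmult_le_reg_r (2 ^ (n+2))); auto. unfold Rdiv. rewrite Rmult_assoc, Rinv_l; lra.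
Qed.

Lemma Pt_in p n s k : 0 <= s <= 1 -> blk k = n -> Pt p n s k = s * bb p n.
Proof.
  intros Hs Hk. unfold Pt, gam. rewrite Hk. f_equal. unfold tent.
  destruct (Pt_time n s Hs) as [_ E]. rewrite E.
  replace (2 + s - 3) with (s - 1) by ring. rewrite Rabs_left1 by lra.
  unfold Rmax. destruct Rle_dec; lra.
Qed.

Lemma Pt_out p n s k : 0 <= s <= 1 -> blk k <> n -> Pt p n s k = 0.
Proof.
  intros Hs Hk. unfold Pt, gam. destruct (Pt_time n s Hs) as [_ E].
  rewrite (tent_seg n (blk k)); [ring| |auto]. rewrite E. lra.
Qed.

Lemma bb_anti p n m : 0 < p -> (n <= m)%nat -> bb p m <= bb p n.
Proof.
  intros Hp H. unfold bb. apply Rmult_le_compat.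
  - left; apply Rpower_pos.
  - left; apply inv_le1.
  - apply Rle_Rpower; [lra|]. rewrite !neg_div by lra. apply Ropp_le_contravar.
    unfold Rdiv. apply Rmult_le_compat_r; [left; apply Rinv_0_lt_compat; lra|]. apply le_INR; auto.
  - apply Rinv_le_contravar; [pose proof (pos_INR n); lra|]. apply le_INR in H. lra.
Qed.

Lemma geo_half N : sum_f_R0 (fun i => (/2) ^ (S i)) N <= 1.
Proof.
  rewrite (sum_eq _ (fun i => (/2) ^ i * /2)) by (intros; simpl; ring).
  rewrite sum_scal, tech3 by lra. pose proof (pow_lt (/2) (S N) ltac:(lra)).
  unfold Rdiv. replace (/ (1 - /2)) with 2 by field. lra.
Qed.

Lemma H1_lower p : 1 < p -> ~ H1_finite p (Gam p).
Proof.
  intros Hp [M HM].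
  destruct (harm_unb (4 * M + 8)) as [n1 Hn1].
  pose proof (bb_pos p n1) as Hb1.
  destruct (HM (bb p n1 / 4) 1 ltac:(lra) ltac:(lra)) as [C [d [Hcov [Hd [Hdiam Hsum]]]]].
  set (Aof := fun n => fsum (fun m => / (2 * (INR m + 1))) n).
  set (S := fun i y => exists n s, (n <= n1)%nat /\ 1/2 <= s <= 1 /\
              y = Aof n + (s - 1/2) * / (INR n + 1) /\ C i (Pt p n s)).
  assert (HSd : forall i y y', S i y -> S i y' -> Rabs (y - y') <= d i).
  { intros i y y' [n [s [Hn [Hs [-> HC]]]]] [n' [s' [Hn' [Hs' [-> HC']]]]].
    specialize (Hdiam i _ _ HC HC').
    destruct (Nat.eq_dec n n') as [<-|Hne].
    - replace (Aof n + (s - 1 / 2) * / (INR n + 1) - (Aof n + (s' - 1 / 2) * / (INR n + 1)))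
        with ((s - s') * / (INR n + 1)) by ring.
      rewrite Rabs_mult, (Rabs_right (/ (INR n + 1))) by (left; apply inv_le1).
      rewrite <- (Lp_eq p n) by lra.
      apply (rpow_le_inv p); [lra| |apply Hd|].
      { apply Rmult_le_pos; [apply Rabs_pos|left; apply Lq_pos]. }
      eapply Rle_trans; [|apply (proj2 Hdiam (2 ^ n - 1 + 2 ^ n - 1)%nat)].
      apply block_norm_ge; [lra|apply Rabs_pos|].
      intros k Hk. unfold seq_sub. rewrite !Pt_in by (auto; lra).
      rewrite <- Rmult_minus_distr_r, Rabs_mult, (Rabs_right (bb p n)) by (left; apply bb_pos). lra.
    - exfalso. set (k0 := (2 ^ n - 1)%nat).
      assert (Hk0 : blk k0 = n) by (apply blk_iff; pose proof (pow2_pos_nat n); unfold k0; lia).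
      pose proof (coord_le p _ _ k0 ltac:(lra) Hdiam) as Hc.
      unfold seq_sub in Hc. rewrite (Pt_in p n s k0) in Hc by (auto; lra). rewrite (Pt_out p n' s' k0) in Hc by (try lra; rewrite Hk0; auto).
      rewrite Rminus_0_r, Rabs_right in Hc by (pose proof (bb_pos p n); apply Rle_ge; nra).
      pose proof (bb_anti p n n1 ltac:(lra) Hn). pose proof (Hd i). pose proof (bb_pos p n). nra. }
  set (e := fun i : nat => (/2) ^ (Datatypes.S i)).
  assert (He : forall i, 0 < e i) by (intro; apply pow_lt; lra).
  set (xi := fun i => epsilon (inhabits 0) (S i)).
  destruct (creep (fun i => xi i - d i - e i) (fun i => xi i + d i + e i) 0 (Aof (Datatypes.S n1)))
    as [N HN].
  { unfold Aof. apply Rle_trans with (fsum (fun _ => 0) (Datatypes.S n1)); [rewrite fsum_const; lra|].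
    apply fsum_le. intros. left. apply Rinv_0_lt_compat. pose proof (pos_INR i); lra. }
  { intros y Hy.
    destruct (fsum_search (fun m => / (2 * (INR m + 1))) n1 y) as [n [Hn Hyn]].
    { intro i. left. apply Rinv_0_lt_compat. pose proof (pos_INR i); lra. }
    { exact Hy. }
    set (s := 1/2 + (y - Aof n) * (INR n + 1)).
    pose proof (pos_INR n).
    assert (HAS : Aof (Datatypes.S n) = Aof n + / (2 * (INR n + 1))) by reflexivity.
    fold (Aof n) in Hyn. fold (Aof (Datatypes.S n)) in Hyn.
    assert (Hs : 1/2 <= s <= 1).
    { unfold s. split.
      - assert (0 <= (y - Aof n) * (INR n + 1)) by (apply Rmult_le_pos; lra). lra.
      - assert ((y - Aof n) * (INR n + 1) <= / (2 * (INR n + 1)) * (INR n + 1)) by (apply Rmult_le_compat_r; lra).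
        replace (/ (2 * (INR n + 1)) * (INR n + 1)) with (1/2) in H0 by (field; lra). lra. }
    assert (Hm : Gam p (Pt p n s)).
    { exists ((2 + s) / 2 ^ (n+2)). split; [apply Pt_time; lra|reflexivity]. }
    destruct (Hcov _ Hm) as [i Hi].
    assert (HSi : S i y).
    { exists n, s. split; auto. split; auto. split; auto. unfold s. field. lra. }
    exists i. assert (HSx : S i (xi i)) by (apply epsilon_spec; eauto).
    pose proof (HSd i y (xi i) HSi HSx). pose proof (He i).
    match goal with H : Rabs _ <= _ |- _ => revert H end. unfold Rabs; destruct Rcase_abs; intros; lra. }
  assert (Hsum2 : sum_f_R0 (fun i => Rmax 0 (xi i + d i + e i - (xi i - d i - e i))) N
                  = 2 * sum_f_R0 d N + 2 * sum_f_R0 e N).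
  { rewrite (sum_eq _ (fun i => 2 * d i + 2 * e i)).
    - rewrite sum_plus'. rewrite (Rmult_comm 2 (sum_f_R0 d N)), (Rmult_comm 2 (sum_f_R0 e N)).
      rewrite <- (sum_scal d 2), <- (sum_scal e 2).
      f_equal; apply sum_eq; intros; ring.
    - intros i _. pose proof (Hd i). pose proof (He i). unfold Rmax. destruct Rle_dec; lra. }
  rewrite Hsum2 in HN. pose proof (Hsum N). pose proof (geo_half N).
  assert (sum_f_R0 e N <= 1) by (unfold e; auto).
  assert (HA : Aof (Datatypes.S n1) = / 2 * sum_f_R0 (fun n => / (INR n + 1)) n1).
  { unfold Aof. rewrite sum_fsum, <- fsum_scal. apply fsum_ext. intros. field.
    pose proof (pos_INR i); lra. }
  pose proof (harm n1). lra.
Qed.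

Theorem proposition1p1 (p : R) (hp : 1 < p) :
  (forall q : R, p <= q ->
     (forall x : rseq, in_lr p x -> in_lr q x) /\
     (forall G : rset, rectifiable_curve p G -> rectifiable_curve q G)) /\
  (exists G : rset, is_curve p G /\
     (forall q : R, p < q -> H1_finite q G) /\
     ~ H1_finite p G).
Proof.
  split.
  - intros q Hq. apply part1; lra.
  - exists (Gam p). split; [|split].
    + exists (gam p). split; [apply gam_cont; auto|]. intro x. unfold Gam. tauto.
    + intros q Hq. apply H1_upper; auto.
    + apply H1_lower; auto.
Qed.
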